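(* Let $m,n$ be nonzero integers with $|m|<|n|$. Let $u_1,u_2,u_3$ be vertices of type $a$ of $\Lambda_{m,n}$ with $u_1<u_2<u_3$. For $i,j\in\{1,2,3\}$ let $\Lambda_{ij}=\mathrm{lk}_\Lambda(u_i)\cap\mathrm{lk}_\Lambda(u_j)$, and assume $\Lambda_{13}\neq\emptyset$. Then $\Lambda_{13}\subsetneq\Lambda_{12}$ and $\Lambda_{13}\subseteq \Lambda_{23}$. Moreover, if $m$ does not divide $n$ then $\Lambda_{13}\subsetneq \Lambda_{23}$, and if $m$ divides $n$ then $\Lambda_{13}=\Lambda_{23}$.
   Context: $\mathrm{BS}(m,n)=\langle a,t\mid ta^mt^{-1}=a^n\rangle$; $\Upsilon_{m,n}$ is its Cayley graph for $\{a,t\}$ (edges $g\to gs$ oriented, labeled $s$); $a$-lines and $t$-lines are the subgraphs spanned by left cosets of $\langle a\rangle$ and $\langle t\rangle$. $\Lambda_{m,n}$ has one vertex per $a$-line or $t$-line (of type $a$ or $t$), adjacent when the lines intersect; $\mathrm{lk}_\Lambda(u)$ is the set of neighbours of $u$. $T$ is the Bass–Serre tree whose vertices are the $a$-lines (= type-$a$ vertices), with one edge oriented from $\ell$ to $\ell'$ for each pair of $a$-lines such that $gt\in\ell'$ for some $g\in\ell$. Partial order: $v_1\le v_2$ if every edge of the geodesic from $v_1$ to $v_2$ in $T$ is oriented toward $v_2$; $<$ denotes strict order. *)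

(* Defs.v *)
(* Baumslag-Solitar group BS(m,n) = <a,t | t a^m t^-1 = a^n>
   presented concretely: group elements are words in a^{+-1}, t^{+-1},
   compared up to the congruence generated by free reduction and insertion/
   deletion of the relator t a^m t^-1 a^-n (this is exactly the presented group). *)
From Stdlib Require Import ZArith List Relations.
Import ListNotations.
Open Scope Z_scope.

Inductive gen := GA | GT.
(* a letter: generator together with an "inverse" flag *)
Definition letter : Type := (gen * bool)%type.
Definition word : Type := list letter.
Definition inv_letter (l : letter) : letter := (fst l, negb (snd l)).

Definition gpow (x : gen) (k : Z) : word :=
  if 0 <=? k then repeat (x, false) (Z.to_nat k)
  else repeat (x, true) (Z.to_nat (- k)).

Definition relator (m n : Z) : word :=
  (GT, false) :: gpow GA m ++ (GT, true) :: gpow GA (- n).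

Inductive bs_step (m n : Z) : word -> word -> Prop :=
| step_free u v l : bs_step m n (u ++ l :: inv_letter l :: v) (u ++ v)
| step_rel u v : bs_step m n (u ++ relator m n ++ v) (u ++ v).

Definition bs_eq (m n : Z) : relation word :=
  clos_refl_sym_trans word (bs_step m n).

(* Vertices of Lambda_{m,n}: an a-line g<a> or a t-line g<t>, given by a
   representative g (cosets are compared via [vsame]). *)
Inductive vtype := TypeA | TypeT.
Definition vgen (ty : vtype) : gen := match ty with TypeA => GA | TypeT => GT end.
Record vertex := Vtx { vty : vtype; vrep : word }.

Definition line (m n : Z) (v : vertex) (h : word) : Prop :=
  exists k : Z, bs_eq m n h (vrep v ++ gpow (vgen (vty v)) k).

Definition vsame (m n : Z) (u v : vertex) : Prop :=
  vty u = vty v /\ forall h, line m n u h <-> line m n v h.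

Definition adjL (m n : Z) (u v : vertex) : Prop :=
  ~ vsame m n u v /\ exists h, line m n u h /\ line m n v h.

(* lk(u_i) ∩ lk(u_j), as a predicate on vertices (invariant under vsame) *)
Definition Lam (m n : Z) (ui uj : vertex) (w : vertex) : Prop :=
  adjL m n ui w /\ adjL m n uj w.

(* Bass-Serre tree: vertices = a-lines; oriented edge l -> l' iff g t ∈ l'
   for some g ∈ l *)
Definition Tedge (m n : Z) (l l' : vertex) : Prop :=
  vty l = TypeA /\ vty l' = TypeA /\
  exists g, line m n l g /\ line m n l' (g ++ [(GT, false)]).

Definition Tadj (m n : Z) (l l' : vertex) : Prop := Tedge m n l l' \/ Tedge m n l' l.

(* walk x = x0, x1, ..., xk ≈ y in T, with xs = [x1; ...; xk] *)
Fixpoint is_walk (m n : Z) (x : vertex) (xs : list vertex) (y : vertex) : Prop :=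
  match xs with
  | [] => vsame m n x y
  | z :: zs => Tadj m n x z /\ is_walk m n z zs y
  end.

Definition geodesic (m n : Z) (x : vertex) (xs : list vertex) (y : vertex) : Prop :=
  is_walk m n x xs y /\
  forall ys, is_walk m n x ys y -> (length xs <= length ys)%nat.

Fixpoint all_fwd (m n : Z) (x : vertex) (xs : list vertex) : Prop :=
  match xs with
  | [] => True
  | z :: zs => Tedge m n x z /\ all_fwd m n z zs
  end.

Definition Tle (m n : Z) (v1 v2 : vertex) : Prop :=
  vty v1 = TypeA /\ vty v2 = TypeA /\
  forall xs, geodesic m n v1 xs v2 -> all_fwd m n v1 xs.

Definition Tlt (m n : Z) (v1 v2 : vertex) : Prop :=
  Tle m n v1 v2 /\ ~ vsame m n v1 v2.

Definition psubset (P Q : vertex -> Prop) : Prop := forall w, P w -> Q w.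
Definition pssubset (P Q : vertex -> Prop) : Prop :=
  psubset P Q /\ exists w, Q w /\ ~ P w.
Definition peq (P Q : vertex -> Prop) : Prop := forall w, P w <-> Q w.

(* Main.v *)
Require Import Defs.
From Stdlib Require Import ZArith List Relations Lia Setoid Morphisms Classical.
Import ListNotations.
Open Scope Z_scope.

Section BS.
Variables m n : Z.
Hypothesis Hm : m <> 0.
Hypothesis Hn : n <> 0.

Definition NF := (list (Z * bool) * Z)%type.
Definition modu (e : bool) := if e then m else n.
Definition carr (e : bool) := if e then n else m.
Lemma modu_nz e : modu e <> 0. Proof. destruct e; simpl; auto. Qed.

Fixpoint addb (j : Z) (b : list (Z * bool)) (s : Z) : NF :=
  match b with
  | [] => ([], s + j)
  | (r, e) :: rest =>
      let p := addb ((r + j) / modu e * carr e) rest s in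
      (((r + j) mod modu e, e) :: fst p, snd p)
  end.
Definition addN (j : Z) (X : NF) : NF := addb j (fst X) (snd X).

Definition actT (X : NF) : NF :=
  match fst X with
  | (r, true) :: rest => if Z.eqb r 0 then (rest, snd X) else ((0, false) :: fst X, snd X)
  | _ => ((0, false) :: fst X, snd X)
  end.
Definition actTi (X : NF) : NF :=
  match fst X with
  | (r, false) :: rest => if Z.eqb r 0 then (rest, snd X) else ((0, true) :: fst X, snd X)
  | _ => ((0, true) :: fst X, snd X)
  end.

Definition act1 (l : letter) (X : NF) : NF :=
  match l with
  | (GA, false) => addN 1 X
  | (GA, true) => addN (-1) X
  | (GT, false) => actT X
  | (GT, true) => actTi X
  end.
Definition act (w : word) (X : NF) : NF := fold_right act1 X w.
Definition base : NF := ([], 0).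
Definition E (w : word) : NF := act w base.

Definition nopinch (e : bool) (rest : list (Z * bool)) : Prop :=
  match rest with (r', e') :: _ => ~ (r' = 0 /\ e' = negb e) | [] => True end.
Fixpoint validb (b : list (Z * bool)) : Prop :=
  match b with
  | [] => True
  | (r, e) :: rest => r mod modu e = r /\ validb rest /\ nopinch e rest
  end.
Definition valid (X : NF) := validb (fst X).

Lemma addb_add : forall b j j' s,
  addb j (fst (addb j' b s)) (snd (addb j' b s)) = addb (j + j') b s.
Proof.
  induction b as [|[r e] rest IH]; intros j j' s; simpl.
  - f_equal; ring.
  - rewrite IH. pose proof (modu_nz e) as HN.
    rewrite Z.add_mod_idemp_l by auto.
    replace (r + j' + j) with (r + (j + j')) by ring.
    assert (Hq : ((r + j') mod modu e + j) / modu e * carr e + (r + j') / modu e * carr e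
                 = (r + (j + j')) / modu e * carr e).
    { rewrite <- Z.mul_add_distr_r. f_equal.
      assert (Heq : r + (j + j') = (r + j') / modu e * modu e + ((r + j') mod modu e + j))
        by (pose proof (Z.div_mod (r + j') (modu e) HN); lia).
      rewrite Heq, Z.div_add_l by auto. ring. }
    rewrite Hq. reflexivity.
Qed.

Lemma mod_self_div r N : N <> 0 -> r mod N = r -> r / N = 0.
Proof.
  intros HN H. pose proof (Z.div_mod r N HN) as D. rewrite H in D.
  assert (N * (r / N) = 0) by lia. apply Z.mul_eq_0 in H0. lia.
Qed.

Lemma addb_0 : forall b s, validb b -> addb 0 b s = (b, s).
Proof.
  induction b as [|[r e] rest IH]; intros s Hv; simpl.
  - f_equal; ring.
  - destruct Hv as [H1 [H2 H3]]. rewrite Z.add_0_r, H1.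
    rewrite (mod_self_div r (modu e)) by (auto using modu_nz). simpl.
    rewrite IH by auto. reflexivity.
Qed.

Lemma addb_valid : forall b j s, validb b -> validb (fst (addb j b s)).
Proof.
  induction b as [|[r e] rest IH]; intros j s Hv; simpl; auto.
  destruct Hv as [H1 [H2 H3]]. split; [|split].
  - apply Z.mod_mod, modu_nz.
  - apply IH; auto.
  - destruct rest as [|[r' e'] rest']; simpl; auto.
    simpl in H3. intros [Hr He]. apply H3. split; auto.
    subst e'. simpl in H2. destruct H2 as [H4 _].
    revert Hr. replace (modu (negb e)) with (carr e) by (destruct e; reflexivity).
    replace (modu (negb e)) with (carr e) in H4 by (destruct e; reflexivity).
    rewrite Z.mod_add. rewrite H4; auto.
    destruct e; simpl; auto.
Qed.

Definition shiftN (k : Z) (X : NF) : NF := (fst X, snd X + k).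

Lemma addb_shift : forall b j s k, addb j b (s + k) = shiftN k (addb j b s).
Proof.
  induction b as [|[r e] rest IH]; intros j s k; simpl.
  - unfold shiftN; simpl; f_equal; ring.
  - rewrite IH. reflexivity.
Qed.

Lemma act1_shift l X k : act1 l (shiftN k X) = shiftN k (act1 l X).
Proof.
  destruct X as [b s]. destruct l as [[|] [|]]; simpl; unfold addN, actT, actTi, shiftN; simpl;
   try (rewrite addb_shift; reflexivity).
  - destruct b as [|[r [|]] rest]; simpl; auto. destruct (Z.eqb r 0); auto.
  - destruct b as [|[r [|]] rest]; simpl; auto. destruct (Z.eqb r 0); auto.
Qed.

Lemma act_shift w X k : act w (shiftN k X) = shiftN k (act w X).
Proof.
  induction w; simpl; auto. rewrite IHw. apply act1_shift.
Qed.

Lemma actT_valid X : valid X -> valid (actT X).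
Proof.
  destruct X as [b s]; unfold valid, actT; simpl.
  destruct b as [|[r [|]] rest]; simpl; intros Hv.
  - repeat split; auto.
  - destruct (Z.eqb r 0) eqn:E0; simpl.
    + tauto.
    + apply Z.eqb_neq in E0. repeat split; try tauto; try (intros [H1 _]; auto).
  - repeat split; try tauto; try (intros [_ H]; discriminate).
Qed.

Lemma actTi_valid X : valid X -> valid (actTi X).
Proof.
  destruct X as [b s]; unfold valid, actTi; simpl.
  destruct b as [|[r [|]] rest]; simpl; intros Hv.
  - repeat split; auto.
  - repeat split; try tauto; try (intros [_ H]; discriminate).
  - destruct (Z.eqb r 0) eqn:E0; simpl.
    + tauto.
    + apply Z.eqb_neq in E0. repeat split; try tauto; try (intros [H1 _]; auto).
Qed.

Lemma act1_valid l X : valid X -> valid (act1 l X).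
Proof.
  intros Hv. destruct l as [[|] [|]]; simpl.
  - apply addb_valid; auto.
  - apply addb_valid; auto.
  - apply actTi_valid; auto.
  - apply actT_valid; auto.
Qed.

Lemma act_valid w X : valid X -> valid (act w X).
Proof. induction w; simpl; auto using act1_valid. Qed.

Lemma actT_actTi X : valid X -> actT (actTi X) = X.
Proof.
  destruct X as [b s]; unfold valid, actT, actTi; simpl.
  destruct b as [|[r [|]] rest]; simpl; intros Hv; auto.
  destruct (Z.eqb r 0) eqn:E0; simpl.
  - apply Z.eqb_eq in E0; subst r.
    destruct rest as [|[r' [|]] rest']; simpl; auto.
    destruct (Z.eqb r' 0) eqn:E1; auto. apply Z.eqb_eq in E1; subst.
    exfalso. destruct Hv as [_ [_ H]]. apply H; auto.
  - try rewrite Z.eqb_refl; reflexivity.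
Qed.

Lemma actTi_actT X : valid X -> actTi (actT X) = X.
Proof.
  destruct X as [b s]; unfold valid, actT, actTi; simpl.
  destruct b as [|[r [|]] rest]; simpl; intros Hv; auto.
  destruct (Z.eqb r 0) eqn:E0; simpl.
  - apply Z.eqb_eq in E0; subst r.
    destruct rest as [|[r' [|]] rest']; simpl; auto.
    destruct (Z.eqb r' 0) eqn:E1; auto. apply Z.eqb_eq in E1; subst.
    exfalso. destruct Hv as [_ [_ H]]. apply H; auto.
  - try rewrite Z.eqb_refl; reflexivity.
Qed.

Lemma addN_addN j j' X : addN j (addN j' X) = addN (j + j') X.
Proof. unfold addN. apply addb_add. Qed.
Lemma addN_0 X : valid X -> addN 0 X = X.
Proof. destruct X; unfold addN; simpl; apply addb_0. Qed.

Lemma act1_inv l X : valid X -> act1 l (act1 (inv_letter l) X) = X.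
Proof.
  intros Hv. destruct l as [[|] [|]]; simpl.
  - rewrite addN_addN. replace (-1 + 1) with 0 by ring. apply addN_0; auto.
  - rewrite addN_addN. replace (1 + -1) with 0 by ring. apply addN_0; auto.
  - apply actTi_actT; auto.
  - apply actT_actTi; auto.
Qed.

Lemma inv_letter_inv l : inv_letter (inv_letter l) = l.
Proof. destruct l as [x b]; unfold inv_letter; simpl; rewrite Bool.negb_involutive; auto. Qed.

Lemma act1_inv' l X : valid X -> act1 (inv_letter l) (act1 l X) = X.
Proof. intros Hv. rewrite <- (inv_letter_inv l) at 2. apply act1_inv; auto. Qed.

Lemma act_app u v X : act (u ++ v) X = act u (act v X).
Proof. unfold act. apply fold_right_app. Qed.

Lemma act_repeat_aplus : forall k X, act (repeat (GA, false) k) X = addN (Z.of_nat k) X \/ ~ valid X.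
Abort.

Lemma act_gpowA k X : valid X -> act (gpow GA k) X = addN k X.
Proof.
  intros Hv. unfold gpow. destruct (0 <=? k) eqn:Hk.
  - apply Z.leb_le in Hk. rewrite <- (Z2Nat.id k) at 2 by auto.
    induction (Z.to_nat k) as [|N IH]; simpl.
    + symmetry; apply addN_0; auto.
    + rewrite IH. unfold act1. rewrite addN_addN. f_equal. lia.
  - apply Z.leb_gt in Hk. replace k with (- Z.of_nat (Z.to_nat (- k))) at 2 by lia.
    induction (Z.to_nat (-k)) as [|N IH]; simpl.
    + symmetry; apply addN_0; auto.
    + rewrite IH. unfold act1. rewrite addN_addN. f_equal. lia.
Qed.


Lemma act_gpowA_base k : E (gpow GA k) = ([], k).
Proof. unfold E. rewrite act_gpowA by (unfold valid; simpl; auto). reflexivity. Qed.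

Lemma rel_act X : valid X -> act (relator m n) X = X.
Proof.
  intros Hv. unfold relator. simpl act. rewrite act_app. simpl act.
  rewrite (act_gpowA (- n)) by auto.
  rewrite (act_gpowA m) by (apply actTi_valid; unfold addN, valid; apply addb_valid; auto).
  destruct X as [b s]. unfold valid in Hv; simpl in Hv.
  destruct b as [|[r [|]] rest].
  - unfold addN, actTi, actT. simpl.
    rewrite Z.mod_same, Z.div_same by auto. rewrite Z.mul_1_l. simpl. f_equal. ring.
  -
    destruct Hv as [H1 [H2 H3]]. simpl in H1.
    unfold addN. simpl fst. simpl snd. cbn [addb modu carr].
    set (r1 := (r + - n) mod m). set (c := (r + - n) / m).
    set (p := addb (c * n) rest s).
    unfold actTi. simpl.
    unfold addN. simpl. rewrite Z.mod_same, Z.div_same by auto.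
    rewrite Z.mul_1_l. unfold p. rewrite addb_add.
    assert (Hd : r + - n = m * c + r1) by (apply Z.div_mod; auto).
    assert (E1 : r1 + n = r + (- c) * m) by lia.
    rewrite E1. rewrite Z.mod_add, Z.div_add by auto. rewrite H1.
    rewrite (mod_self_div r m Hm H1).
    replace ((0 + - c) * n + c * n) with 0 by ring.
    rewrite addb_0 by auto. unfold actT. simpl. reflexivity.
  - destruct Hv as [H1 [H2 H3]]. cbn [modu] in H1.
    unfold addN. cbn [fst snd addb modu carr].
    replace (r + - n) with (r + (-1) * n) by ring.
    rewrite Z.mod_add, Z.div_add by auto. rewrite H1, (mod_self_div r n Hn H1).
    set (p := addb ((0 + -1) * m) rest s).
    assert (Hp : addb m (fst p) (snd p) = (rest, s)).
    { unfold p. rewrite addb_add. replace (m + (0 + -1) * m) with 0 by ring. apply addb_0; auto. }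
    unfold actTi. cbn [fst snd].
    destruct (Z.eqb r 0) eqn:E0.
    + apply Z.eqb_eq in E0. subst r. unfold addN. cbn [fst snd]. rewrite Hp.
      unfold actT; cbn [fst snd].
      destruct rest as [|[r' [|]] rest']; auto.
      destruct (Z.eqb r' 0) eqn:E1; auto. apply Z.eqb_eq in E1. subst.
      exfalso. apply H3; auto.
    + unfold addN. cbn [fst snd addb modu carr]. rewrite Z.add_0_l, Z.mod_same, Z.div_same by auto.
      replace (r + 1 * n) with (r + 1 * n) by ring.
      rewrite Z.mod_add, Z.div_add by auto. rewrite H1, (mod_self_div r n Hn H1).
      rewrite Z.add_0_l, Z.mul_1_l. rewrite Hp. unfold actT. cbn. reflexivity.
Qed.


Lemma act_cons l w X : act (l :: w) X = act1 l (act w X).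
Proof. reflexivity. Qed.

Lemma step_E u v : bs_step m n u v -> E u = E v.
Proof.
  intros H. destruct H; unfold E; rewrite !act_app; rewrite ?act_cons.
  - rewrite act1_inv; auto. apply act_valid. unfold valid; simpl; auto.
  - rewrite rel_act; auto. apply act_valid. unfold valid; simpl; auto.
Qed.

Lemma geq_E u v : bs_eq m n u v -> E u = E v.
Proof.
  intros H. induction H; auto using step_E. congruence.
Qed.

Fixpoint texp (w : word) : Z :=
  match w with
  | [] => 0
  | (GT, false) :: w' => 1 + texp w'
  | (GT, true) :: w' => -1 + texp w'
  | _ :: w' => texp w'
  end.

Lemma texp_app u v : texp (u ++ v) = texp u + texp v.
Proof. induction u as [|[[|] [|]] u IH]; cbn [texp app]; try rewrite IH; ring. Qed.

Lemma texp_gpow x k : texp (gpow x k) = match x with GA => 0 | GT => k end.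
Proof.
  unfold gpow. destruct (0 <=? k) eqn:Hk.
  - apply Z.leb_le in Hk. destruct x.
    + induction (Z.to_nat k); simpl; auto.
    + rewrite <- (Z2Nat.id k) at 2 by auto. induction (Z.to_nat k); cbn [repeat texp]; auto. rewrite IHn0, Nat2Z.inj_succ. lia.
  - apply Z.leb_gt in Hk. destruct x.
    + induction (Z.to_nat (- k)); simpl; auto.
    + replace k with (- Z.of_nat (Z.to_nat (- k))) at 2 by lia.
      induction (Z.to_nat (-k)); cbn [repeat texp]; auto. rewrite IHn0, Nat2Z.inj_succ. lia.
Qed.

Lemma texp_step u v : bs_step m n u v -> texp u = texp v.
Proof.
  intros H; destruct H; rewrite !texp_app; cbn [texp].
  - destruct l as [[|] [|]]; cbn [texp inv_letter fst snd negb]; ring.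
  - unfold relator. cbn [texp]. rewrite !texp_app. cbn [texp]. rewrite !texp_gpow. ring.
Qed.

Lemma texp_geq u v : bs_eq m n u v -> texp u = texp v.
Proof. intros H; induction H; auto using texp_step. congruence. Qed.

End BS.

Add Parametric Relation (m n : Z) : word (bs_eq m n)
  reflexivity proved by (fun x => rst_refl _ _ x)
  symmetry proved by (fun x y => rst_sym _ _ x y)
  transitivity proved by (fun x y z => rst_trans _ _ x y z)
  as bs_eq_rel.

Lemma step_ctx m n p q u v : bs_step m n u v -> bs_step m n (p ++ u ++ q) (p ++ v ++ q).
Proof.
  intros H; destruct H.
  - replace (p ++ (u ++ l :: inv_letter l :: v) ++ q) with ((p ++ u) ++ l :: inv_letter l :: (v ++ q))
      by (rewrite <- !app_assoc; reflexivity).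
    replace (p ++ (u ++ v) ++ q) with ((p ++ u) ++ (v ++ q)) by (rewrite <- !app_assoc; reflexivity).
    constructor.
  - replace (p ++ (u ++ relator m n ++ v) ++ q) with ((p ++ u) ++ relator m n ++ (v ++ q))
      by (rewrite <- !app_assoc; reflexivity).
    replace (p ++ (u ++ v) ++ q) with ((p ++ u) ++ (v ++ q)) by (rewrite <- !app_assoc; reflexivity).
    constructor.
Qed.

Lemma geq_ctx m n p q u v : bs_eq m n u v -> bs_eq m n (p ++ u ++ q) (p ++ v ++ q).
Proof.
  intros H; induction H.
  - apply rst_step, step_ctx; auto.
  - reflexivity.
  - symmetry; auto.
  - etransitivity; eauto.
Qed.

Add Parametric Morphism (m n : Z) : (@app letter)
  with signature (bs_eq m n) ==> (bs_eq m n) ==> (bs_eq m n) as app_geq.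
Proof.
  intros u u' Hu v v' Hv.
  transitivity (u' ++ v).
  - pose proof (geq_ctx m n [] v u u' Hu) as H. simpl in H. exact H.
  - pose proof (geq_ctx m n u' [] v v' Hv) as H. rewrite !app_nil_r in H. exact H.
Qed.

Add Parametric Morphism (m n : Z) (l : letter) : (cons l)
  with signature (bs_eq m n) ==> (bs_eq m n) as cons_geq.
Proof.
  intros u u' Hu. change (l :: u) with ([l] ++ u). change (l :: u') with ([l] ++ u'). rewrite Hu. reflexivity.
Qed.

Lemma free_geq m n l R : bs_eq m n (l :: inv_letter l :: R) R.
Proof. apply rst_step. apply (step_free m n [] R l). Qed.

Lemma gpow_succ m n x k : bs_eq m n (gpow x (k + 1)) ((x, false) :: gpow x k).
Proof.
  unfold gpow. destruct (Z_lt_le_dec k (-1)) as [H|H].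
  - destruct (0 <=? k + 1) eqn:H1; [apply Z.leb_le in H1; lia|].
    destruct (0 <=? k) eqn:H2; [apply Z.leb_le in H2; lia|].
    replace (Z.to_nat (- k)) with (S (Z.to_nat (- (k + 1)))) by lia. simpl.
    symmetry. apply (free_geq m n (x, false)).
  - destruct (Z.eq_dec k (-1)) as [->|H'].
    + simpl. symmetry. apply (free_geq m n (x, false) []).
    + destruct (0 <=? k + 1) eqn:H1; [|apply Z.leb_gt in H1; lia].
      destruct (0 <=? k) eqn:H2; [|apply Z.leb_gt in H2; lia].
      replace (Z.to_nat (k + 1)) with (S (Z.to_nat k)) by lia. reflexivity.
Qed.

Lemma gpow_pred m n x k : bs_eq m n (gpow x (k - 1)) ((x, true) :: gpow x k).
Proof.
  unfold gpow. destruct (Z_lt_le_dec 1 k) as [H|H].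
  - destruct (0 <=? k - 1) eqn:H1; [|apply Z.leb_gt in H1; lia].
    destruct (0 <=? k) eqn:H2; [|apply Z.leb_gt in H2; lia].
    replace (Z.to_nat k) with (S (Z.to_nat (k - 1))) by lia. simpl.
    symmetry. apply (free_geq m n (x, true)).
  - destruct (Z.eq_dec k 1) as [->|H'].
    + simpl. symmetry. apply (free_geq m n (x, true) []).
    + destruct (0 <=? k - 1) eqn:H1; [apply Z.leb_le in H1; lia|].
      destruct (0 <=? k) eqn:H2.
      * apply Z.leb_le in H2. assert (k = 0) by lia. subst. simpl. reflexivity.
      * replace (Z.to_nat (- (k - 1))) with (S (Z.to_nat (- k))) by lia. reflexivity.
Qed.

Lemma gpow_add m n x i j : bs_eq m n (gpow x i ++ gpow x j) (gpow x (i + j)).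
Proof.
  induction i using Z.peano_ind.
  - simpl. reflexivity.
  - rewrite <- Z.add_1_r. rewrite gpow_succ. simpl. rewrite IHi.
    replace (i + 1 + j) with ((i + j) + 1) by ring. rewrite gpow_succ. reflexivity.
  - rewrite <- Z.sub_1_r. rewrite gpow_pred. simpl. rewrite IHi.
    replace (i - 1 + j) with ((i + j) - 1) by ring. rewrite gpow_pred. reflexivity.
Qed.

Lemma gpow_add_r m n x i j R : bs_eq m n (gpow x i ++ gpow x j ++ R) (gpow x (i + j) ++ R).
Proof. rewrite app_assoc. rewrite gpow_add. reflexivity. Qed.

Lemma relator_ins m n R : bs_eq m n R (relator m n ++ R).
Proof. symmetry. apply rst_step. apply (step_rel m n [] R). Qed.

Lemma swap1 m n R : bs_eq m n (gpow GA n ++ (GT, false) :: R) ((GT, false) :: gpow GA m ++ R).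
Proof.
  rewrite (relator_ins m n (gpow GA n ++ (GT, false) :: R)). unfold relator.
  simpl. rewrite <- !app_assoc. simpl. rewrite gpow_add_r.
  replace (- n + n) with 0 by ring. simpl.
  rewrite (free_geq m n (GT, true) R). reflexivity.
Qed.

Lemma swap2 m n R : bs_eq m n (gpow GA m ++ (GT, true) :: R) ((GT, true) :: gpow GA n ++ R).
Proof.
  rewrite (relator_ins m n (gpow GA n ++ R)). unfold relator.
  simpl. rewrite <- !app_assoc. simpl. rewrite gpow_add_r.
  replace (- n + n) with 0 by ring. simpl.
  rewrite (free_geq m n (GT, true)). reflexivity.
Qed.

Lemma swap1e m n e R : bs_eq m n (gpow GA (modu m n e) ++ (GT, e) :: R) ((GT, e) :: gpow GA (carr m n e) ++ R).
Proof. destruct e; simpl; [apply swap2 | apply swap1]. Qed.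

Lemma swapq m n e : forall q R,
  bs_eq m n (gpow GA (modu m n e * q) ++ (GT, e) :: R) ((GT, e) :: gpow GA (carr m n e * q) ++ R).
Proof.
  intros q. induction q using Z.peano_ind; intros R.
  - rewrite !Z.mul_0_r. simpl. reflexivity.
  - rewrite <- Z.add_1_r, !Z.mul_add_distr_l, !Z.mul_1_r.
    rewrite <- gpow_add_r. rewrite swap1e. rewrite IHq. rewrite gpow_add_r. reflexivity.
  - rewrite <- Z.sub_1_r, !Z.mul_sub_distr_l, !Z.mul_1_r.
    transitivity (gpow GA (modu m n e * q - modu m n e) ++ (GT, e) ::
                    gpow GA (carr m n e) ++ gpow GA (- carr m n e) ++ R).
    { rewrite gpow_add_r. replace (carr m n e + - carr m n e) with 0 by ring. reflexivity. }
    rewrite <- swap1e. rewrite gpow_add_r.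
    replace (modu m n e * q - modu m n e + modu m n e) with (modu m n e * q) by ring.
    rewrite IHq. rewrite gpow_add_r. replace (carr m n e * q + - carr m n e) with (carr m n e * q - carr m n e) by ring.
    reflexivity.
Qed.

Fixpoint bw (b : list (Z * bool)) : word :=
  match b with [] => [] | (r, e) :: rest => gpow GA r ++ (GT, e) :: bw rest end.
Definition nfword (X : NF) : word := bw (fst X) ++ gpow GA (snd X).

Lemma rev_carry m n (Hm : m <> 0) (Hn : n <> 0) : forall b j s,
  bs_eq m n (gpow GA j ++ bw b ++ gpow GA s) (bw (fst (addb m n j b s)) ++ gpow GA (snd (addb m n j b s))).
Proof.
  induction b as [|[r e] rest IH]; intros j s.
  - simpl. rewrite gpow_add. rewrite Z.add_comm. reflexivity.
  - cbn [addb bw fst snd]. rewrite <- !app_assoc. cbn [app].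
    rewrite gpow_add_r.
    pose proof (modu_nz m n Hm Hn e) as HN.
    assert (Hd : j + r = (r + j) mod modu m n e + modu m n e * ((r + j) / modu m n e)).
    { pose proof (Z.div_mod (r + j) (modu m n e) HN). lia. }
    rewrite Hd. rewrite <- gpow_add_r. rewrite swapq.
    rewrite IH. rewrite (Z.mul_comm (carr m n e)). reflexivity.
Qed.

Lemma rev_letter m n (Hm : m <> 0) (Hn : n <> 0) l X :
  valid m n X -> bs_eq m n (l :: nfword X) (nfword (act1 m n l X)).
Proof.
  intros Hv. destruct X as [b s]. unfold nfword. cbn [fst snd].
  destruct l as [[|] [|]].
  - change ((GA, true) :: bw b ++ gpow GA s) with (gpow GA (-1) ++ bw b ++ gpow GA s).
    apply rev_carry; auto.
  - change ((GA, false) :: bw b ++ gpow GA s) with (gpow GA 1 ++ bw b ++ gpow GA s).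
    apply rev_carry; auto.
  - unfold act1, actTi. cbn [fst snd].
    destruct b as [|[r [|]] rest].
    + reflexivity.
    + reflexivity.
    + destruct (Z.eqb r 0) eqn:E0.
      * apply Z.eqb_eq in E0; subst r. cbn [fst snd bw]. simpl gpow. cbn [app].
        apply (free_geq m n (GT, true)).
      * reflexivity.
  - unfold act1, actT. cbn [fst snd].
    destruct b as [|[r [|]] rest].
    + reflexivity.
    + destruct (Z.eqb r 0) eqn:E0.
      * apply Z.eqb_eq in E0; subst r. cbn [fst snd bw]. simpl gpow. cbn [app].
        apply (free_geq m n (GT, false)).
      * reflexivity.
    + reflexivity.
Qed.

Lemma nf_E m n (Hm : m <> 0) (Hn : n <> 0) : forall w, bs_eq m n w (nfword (E m n w)).
Proof.
  induction w as [|l w IH].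
  - reflexivity.
  - rewrite IH at 1. unfold E. rewrite act_cons. apply rev_letter; auto.
    apply act_valid; auto; unfold valid; simpl; auto.
Qed.

Lemma E_inj m n (Hm : m <> 0) (Hn : n <> 0) u v : E m n u = E m n v -> bs_eq m n u v.
Proof.
  intros H. rewrite (nf_E m n Hm Hn u), (nf_E m n Hm Hn v), H. reflexivity.
Qed.

Definition winv (w : word) : word := rev (map inv_letter w).

Lemma winv_l m n g : bs_eq m n (g ++ winv g) [].
Proof.
  induction g as [|l g IH]; simpl; [reflexivity|].
  unfold winv in *. simpl. rewrite app_assoc. rewrite IH. simpl.
  apply (free_geq m n l []).
Qed.

Lemma winv_inv g : winv (winv g) = g.
Proof.
  unfold winv. rewrite map_rev, rev_involutive, map_map.
  rewrite <- (map_id g) at 2. apply map_ext. apply inv_letter_inv.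
Qed.

Lemma winv_r m n g : bs_eq m n (winv g ++ g) [].
Proof. rewrite <- (winv_inv g) at 2. apply winv_l. Qed.

Lemma cancel_l m n g u v : bs_eq m n (g ++ u) (g ++ v) -> bs_eq m n u v.
Proof.
  intros H.
  transitivity ((winv g ++ g) ++ u). { rewrite winv_r. reflexivity. }
  transitivity ((winv g ++ g) ++ v). { rewrite <- !app_assoc. rewrite H. reflexivity. }
  rewrite winv_r. reflexivity.
Qed.

Section Main.
Variables m n : Z.
Hypothesis Hm : m <> 0.
Hypothesis Hn : n <> 0.

Notation geq := (bs_eq m n).
Notation EE := (E m n).

Lemma geq_iff u v : geq u v <-> EE u = EE v.
Proof. split; [apply geq_E; auto | apply E_inj; auto]. Qed.

Lemma E_app u v : EE (u ++ v) = act m n u (EE v).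
Proof. unfold E. apply act_app. Qed.

Lemma E_shiftA u k : EE (u ++ gpow GA k) = shiftN k (EE u).
Proof.
  rewrite E_app, act_gpowA_base by auto.
  replace ([], k) with (shiftN k base) by (unfold shiftN, base; simpl; f_equal).
  unfold E. apply act_shift.
Qed.

Lemma fstE_geq u v : fst (EE u) = fst (EE v) -> geq u (v ++ gpow GA (snd (EE u) - snd (EE v))).
Proof.
  intros H. apply geq_iff. rewrite E_shiftA. unfold shiftN.
  destruct (EE u) as [bu su], (EE v) as [bv sv]; simpl in *. subst. f_equal. ring.
Qed.

Lemma geq_fstE u v k : geq u (v ++ gpow GA k) -> fst (EE u) = fst (EE v).
Proof. intros H. apply geq_iff in H. rewrite H, E_shiftA. reflexivity. Qed.

Lemma texp_fst u v : fst (EE u) = fst (EE v) -> texp u = texp v.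
Proof.
  intros H. apply fstE_geq in H. apply texp_geq in H. rewrite H, texp_app, texp_gpow. ring.
Qed.

Lemma lineA v h : vty v = TypeA -> (line m n v h <-> fst (EE h) = fst (EE (vrep v))).
Proof.
  intros Hv. unfold line. rewrite Hv. simpl. split.
  - intros [k Hk]. eapply geq_fstE; eauto.
  - intros H. eexists. apply fstE_geq; auto.
Qed.

Lemma lineT v h : vty v = TypeT -> (line m n v h <-> exists k, geq h (vrep v ++ gpow GT k)).
Proof. intros Hv. unfold line. rewrite Hv. simpl. tauto. Qed.

Lemma fst_cancel g u v : fst (EE (g ++ u)) = fst (EE (g ++ v)) -> fst (EE u) = fst (EE v).
Proof.
  intros H. apply fstE_geq in H. rewrite <- app_assoc in H. apply cancel_l in H.
  eapply geq_fstE; eauto.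
Qed.

Lemma vsame_refl v : vsame m n v v.
Proof. split; tauto. Qed.
Lemma vsame_sym u v : vsame m n u v -> vsame m n v u.
Proof. intros [H1 H2]; split; [auto|intros h; rewrite H2; tauto]. Qed.
Lemma vsame_trans u v w : vsame m n u v -> vsame m n v w -> vsame m n u w.
Proof. intros [H1 H2] [H3 H4]; split; [congruence|intros h; rewrite H2, H4; tauto]. Qed.

Lemma Tedge_l x x' z : vsame m n x x' -> Tedge m n x z -> Tedge m n x' z.
Proof.
  intros [H1 H2] [Hx [Hz [g [Hg1 Hg2]]]]. split; [congruence|split; auto].
  exists g; split; auto. apply H2; auto.
Qed.
Lemma Tedge_r x z z' : vsame m n z z' -> Tedge m n x z -> Tedge m n x z'.
Proof.
  intros [H1 H2] [Hx [Hz [g [Hg1 Hg2]]]]. split; [auto|split; [congruence|]].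
  exists g; split; auto. apply H2; auto.
Qed.
Lemma Tadj_l x x' z : vsame m n x x' -> Tadj m n x z -> Tadj m n x' z.
Proof. intros H [H1|H1]; [left; eapply Tedge_l | right; eapply Tedge_r]; eauto. Qed.

Lemma walk_end x xs y y' : is_walk m n x xs y -> vsame m n y y' -> is_walk m n x xs y'.
Proof.
  revert x. induction xs as [|z zs IH]; simpl; intros x H1 H2.
  - eapply vsame_trans; eauto.
  - destruct H1; split; eauto.
Qed.

Lemma walk_start x x' xs y : vsame m n x x' -> is_walk m n x' xs y -> is_walk m n x xs y.
Proof.
  destruct xs as [|z zs]; simpl; intros H1 H2.
  - eapply vsame_trans; eauto.
  - destruct H2; split; auto. eapply Tadj_l; eauto. apply vsame_sym; auto.
Qed.

Lemma vsameA r r' : fst (EE r) = fst (EE r') -> vsame m n (Vtx TypeA r) (Vtx TypeA r').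
Proof.
  intros H. split; auto. intros h. rewrite !lineA by reflexivity. simpl. rewrite H. tauto.
Qed.

Lemma walk_word : forall w r, exists xs, is_walk m n (Vtx TypeA r) xs (Vtx TypeA (r ++ w)).
Proof.
  induction w as [|l w IH]; intros r.
  - exists []. simpl. rewrite app_nil_r. apply vsame_refl.
  - destruct (IH (r ++ [l])) as [xs Hxs]. rewrite <- app_assoc in Hxs. simpl in Hxs.
    destruct l as [[|] b].
    + exists xs. eapply walk_start; [|exact Hxs]. apply vsameA.
      destruct b.
      * change [(GA, true)] with (gpow GA (-1)). rewrite E_shiftA. reflexivity.
      * change [(GA, false)] with (gpow GA 1). rewrite E_shiftA. reflexivity.
    + destruct b.
      * exists (Vtx TypeA (r ++ [(GT, true)]) :: xs). simpl. split; auto.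
        right. split; [reflexivity|split; [reflexivity|]].
        exists (r ++ [(GT, true)]). split.
        -- apply lineA; reflexivity.
        -- apply lineA; [reflexivity|]. simpl. f_equal. apply geq_iff.
           rewrite <- app_assoc. simpl.
           transitivity (r ++ []); [|rewrite app_nil_r; reflexivity].
           apply rst_step. apply (step_free m n r [] (GT, true)).
      * exists (Vtx TypeA (r ++ [(GT, false)]) :: xs). simpl. split; auto.
        left. split; [reflexivity|split; [reflexivity|]].
        exists r. split; apply lineA; reflexivity.
Qed.

Lemma walk_exists u v : vty u = TypeA -> vty v = TypeA -> exists xs, is_walk m n u xs v.
Proof.
  intros Hu Hv. destruct (walk_word (winv (vrep u) ++ vrep v) (vrep u)) as [xs Hxs].
  exists xs. eapply walk_start; [|eapply walk_end; [exact Hxs|]].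
  - destruct u as [ty r]; simpl in *; subst. apply vsame_refl.
  - destruct v as [ty r]; simpl in *; subst. apply vsameA. f_equal. apply geq_iff.
    rewrite app_assoc, winv_l. reflexivity.
Qed.

Lemma geo_exists x y xs0 : is_walk m n x xs0 y -> exists xs, geodesic m n x xs y.
Proof.
  intros H0. remember (length xs0) as N. assert (HN : (length xs0 <= N)%nat) by lia. clear HeqN.
  revert xs0 H0 HN. induction N as [N IH] using lt_wf_ind. intros xs0 H0 HN.
  destruct (classic (exists ys, is_walk m n x ys y /\ (length ys < length xs0)%nat)) as [[ys [H1 H2]]|H1].
  - apply (IH (length ys)) with ys; auto. lia.
  - exists xs0. split; auto. intros ys Hys.
    destruct (Nat.le_gt_cases (length xs0) (length ys)); auto.
    exfalso. apply H1. eauto.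
Qed.

Fixpoint posw (ks : list Z) : word :=
  match ks with [] => [] | k :: ks => gpow GA k ++ (GT, false) :: posw ks end.

Lemma chain : forall xs x y, all_fwd m n x xs -> is_walk m n x xs y -> vty x = TypeA ->
  forall r, line m n x r ->
  exists ks, length ks = length xs /\ fst (EE (vrep y)) = fst (EE (r ++ posw ks)).
Proof.
  induction xs as [|z zs IH]; intros x y Hf Hw Hx r Hr.
  - exists []. split; auto. simpl. rewrite app_nil_r.
    destruct Hw as [Ht Hl]. apply Hl in Hr. apply lineA in Hr; [|congruence].
    symmetry; auto.
  - destruct Hf as [Hxz Hf]. destruct Hw as [_ Hw].
    destruct Hxz as [_ [Hz [g0 [Hg1 Hg2]]]].
    apply lineA in Hg1; auto. apply lineA in Hr; auto.
    assert (Hg : fst (EE g0) = fst (EE r)) by congruence.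
    apply fstE_geq in Hg. set (i := snd (EE g0) - snd (EE r)) in Hg.
    assert (Hr' : line m n z (r ++ gpow GA i ++ [(GT, false)])).
    { apply lineA; auto. apply lineA in Hg2; auto. rewrite <- Hg2.
      f_equal. apply geq_iff. rewrite Hg. rewrite <- app_assoc. reflexivity. }
    destruct (IH z y Hf Hw Hz _ Hr') as [ks [Hl He]].
    exists (i :: ks). split; simpl; auto. rewrite He. rewrite <- !app_assoc. reflexivity.
Qed.

Lemma Tlt_chain u v : Tlt m n u v -> forall r, line m n u r ->
  exists ks, (1 <= length ks)%nat /\ fst (EE (vrep v)) = fst (EE (r ++ posw ks)).
Proof.
  intros [[Hu [Hv Hle]] Hns] r Hr.
  destruct (walk_exists u v Hu Hv) as [xs0 H0].
  destruct (geo_exists _ _ _ H0) as [xs [Hw Hmin]].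
  pose proof (Hle xs (conj Hw Hmin)) as Hf.
  destruct (chain xs u v Hf Hw Hu r Hr) as [ks [Hl He]].
  exists ks. split; auto. destruct xs; simpl in *; [contradiction|lia].
Qed.

End Main.

Definition tpow k : word := repeat (GT, false) k.
Definition tnpow k : word := repeat (GT, true) k.
Definition zeros k : list (Z * bool) := repeat (0, false) k.
Definition ones k : list (Z * bool) := repeat (0, true) k.

Lemma gpowT_pos k : gpow GT (Z.of_nat k) = tpow k.
Proof. unfold gpow. rewrite (proj2 (Z.leb_le _ _)) by lia. rewrite Nat2Z.id. reflexivity. Qed.

Lemma gpowT_neg k : gpow GT (- Z.of_nat k) = tnpow k.
Proof.
  destruct k as [|k]; [reflexivity|]. unfold gpow.
  rewrite (proj2 (Z.leb_gt _ _)) by lia. rewrite Z.opp_involutive, Nat2Z.id. reflexivity.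
Qed.

Lemma repeat_S_r {A} (x : A) k : repeat x (S k) = repeat x k ++ [x].
Proof. induction k; simpl; auto. rewrite <- IHk. reflexivity. Qed.

Lemma tpow_add p q : tpow (p + q) = tpow p ++ tpow q.
Proof. unfold tpow. apply repeat_app. Qed.

Section Main2.
Variables m n : Z.
Hypothesis Hm : m <> 0.
Hypothesis Hn : n <> 0.
Notation geq := (bs_eq m n).
Notation EE := (E m n).

Definition notcancel (X : NF) := match fst X with (r, true) :: _ => r <> 0 | _ => True end.
Definition notcancelT (X : NF) := match fst X with (r, false) :: _ => r <> 0 | _ => True end.

Lemma act_tpow k X : notcancel X -> act m n (tpow k) X = (zeros k ++ fst X, snd X).
Proof.
  intros Hc. induction k as [|k IH].
  - destruct X; reflexivity.
  - unfold tpow in *. simpl repeat. rewrite act_cons, IH. unfold act1, actT. cbn [fst snd].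
    destruct k as [|k]; [|reflexivity]. simpl.
    destruct X as [[|[r [|]] b] s]; simpl in *; auto.
    destruct (Z.eqb r 0) eqn:E0; auto. apply Z.eqb_eq in E0. contradiction.
Qed.

Lemma act_tnpow k X : notcancelT X -> act m n (tnpow k) X = (ones k ++ fst X, snd X).
Proof.
  intros Hc. induction k as [|k IH].
  - destruct X; reflexivity.
  - unfold tnpow in *. simpl repeat. rewrite act_cons, IH. unfold act1, actTi. cbn [fst snd].
    destruct k as [|k]; [|reflexivity]. simpl.
    destruct X as [[|[r [|]] b] s]; simpl in *; auto.
    destruct (Z.eqb r 0) eqn:E0; auto. apply Z.eqb_eq in E0. contradiction.
Qed.

Fixpoint inS (k : nat) (j : Z) : Prop :=
  match k with O => True | S k => j mod n = 0 /\ inS k (j / n * m) end.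
Fixpoint inB (k : nat) (j : Z) : Prop :=
  match k with O => True | S k => j mod m = 0 /\ inB k (j / m * n) end.

Lemma zeros_add k : forall j s, (exists f, addb m n j (zeros k) s = (zeros k, f)) <-> inS k j.
Proof.
  induction k as [|k IH]; intros j s.
  - simpl. split; eauto.
  - unfold zeros in *. simpl repeat. cbn [addb modu carr inS]. rewrite Z.add_0_l. split.
    + intros [f Hf]. injection Hf as H1 H2. split; auto.
      apply (IH _ s). exists f. rewrite <- H2 at 2. destruct (addb m n _ _ _); simpl in *; subst; auto.
    + intros [H1 H2]. apply (IH _ s) in H2. destruct H2 as [f Hf]. exists f. rewrite Hf, H1. reflexivity.
Qed.

Lemma ones_act k : forall j s,
  (exists f, act m n (tpow k) (addb m n j (ones k) s) = ([], f)) <-> inB k j.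
Proof.
  induction k as [|k IH]; intros j s.
  - simpl. split; eauto.
  - unfold ones in *. simpl repeat. cbn [addb modu carr inB]. rewrite Z.add_0_l.
    unfold tpow. rewrite repeat_S_r, act_app. fold (tpow k). simpl act.
    unfold actT. cbn [fst snd].
    destruct (Z.eqb (j mod m) 0) eqn:E0.
    + apply Z.eqb_eq in E0. rewrite <- (IH _ s). split.
      * intros [f Hf]. split; auto. exists f. rewrite <- Hf. destruct (addb m n _ _ _); reflexivity.
      * intros [_ [f Hf]]. exists f. rewrite <- Hf. destruct (addb m n _ _ _); reflexivity.
    + apply Z.eqb_neq in E0. split.
      * intros [f Hf]. rewrite act_tpow in Hf by exact I. apply (f_equal fst) in Hf. cbn [fst] in Hf.
        unfold zeros in Hf. destruct k; discriminate.
      * intros [H _]. contradiction.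
Qed.

Lemma E_tpow k : EE (tpow k) = (zeros k, 0).
Proof. unfold E. rewrite act_tpow by exact I. cbn [fst snd base]. rewrite app_nil_r. reflexivity. Qed.
Lemma E_tnpow k : EE (tnpow k) = (ones k, 0).
Proof. unfold E. rewrite act_tnpow by exact I. cbn [fst snd base]. rewrite app_nil_r. reflexivity. Qed.

Lemma valid_zeros k s : valid m n (zeros k, s).
Proof.
  unfold valid, zeros. simpl. induction k as [|k IH]; simpl; auto.
  repeat split; auto. destruct k; simpl; auto. intros [_ H]; discriminate.
Qed.
Lemma valid_ones k s : valid m n (ones k, s).
Proof.
  unfold valid, ones. simpl. induction k as [|k IH]; simpl; auto.
  repeat split; auto. destruct k; simpl; auto. intros [_ H]; discriminate.
Qed.

Lemma InS_geq k j : inS k j -> exists f, geq (gpow GA j ++ tpow k) (tpow k ++ gpow GA f).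
Proof.
  intros H. apply (zeros_add k j 0) in H. destruct H as [f Hf]. exists f.
  apply geq_iff; auto. rewrite !E_app, E_tpow, act_gpowA_base by auto.
  rewrite act_gpowA by (auto; apply valid_zeros).
  unfold addN. cbn [fst snd]. rewrite Hf. rewrite act_tpow by exact I. cbn [fst snd]. rewrite app_nil_r. reflexivity.
Qed.

Lemma InS_rev k j f : geq (gpow GA j ++ tpow k) (tpow k ++ gpow GA f) -> inS k j.
Proof.
  intros H. apply geq_iff in H; auto. rewrite !E_app, E_tpow, act_gpowA_base in H by auto.
  rewrite act_gpowA in H by (auto; apply valid_zeros).
  unfold addN in H. cbn [fst snd] in H. rewrite act_tpow in H by exact I. cbn [fst snd] in H.
  rewrite app_nil_r in H. apply (zeros_add k j 0). eauto.
Qed.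

Lemma InB_geq k j : inB k j -> exists f, geq (tpow k ++ gpow GA j ++ tnpow k) (gpow GA f).
Proof.
  intros H. apply (ones_act k j 0) in H. destruct H as [f Hf]. exists f.
  apply geq_iff; auto. rewrite !E_app, E_tnpow, act_gpowA_base by auto.
  rewrite act_gpowA by (auto; apply valid_ones).
  unfold addN. cbn [fst snd]. rewrite Hf. reflexivity.
Qed.

Lemma InB_rev k j f : geq (tpow k ++ gpow GA j ++ tnpow k) (gpow GA f) -> inB k j.
Proof.
  intros H. apply geq_iff in H; auto. rewrite !E_app, E_tnpow, act_gpowA_base in H by auto.
  rewrite act_gpowA in H by (auto; apply valid_ones).
  unfold addN in H. cbn [fst snd] in H. apply (ones_act k j 0). eauto.
Qed.

End Main2.

Fixpoint zp (b : Z) (k : nat) : Z := match k with O => 1 | S k => b * zp b k end.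

Lemma inS_shift m n d n' m' (Hn : n <> 0) (En : n = d * n') (Em : m = d * m') :
  forall k r c, inS m n (k + r) (d * zp n' k * c) <-> inS m n r (d * zp m' k * c).
Proof.
  induction k as [|k IH]; intros r c.
  - cbn [Nat.add zp]. tauto.
  - cbn [Nat.add zp inS].
    replace (d * (n' * zp n' k) * c) with ((zp n' k * c) * n) by (rewrite En; ring).
    rewrite Z.mod_mul, Z.div_mul by auto.
    replace (zp n' k * c * m) with (d * zp m' 0 * (d * zp n' k * (m' * c)) * 0 + d * zp n' k * (m' * c)) by (rewrite Em; simpl; ring).
    rewrite Z.mul_0_r, Z.add_0_l.
    rewrite IH. replace (d * (m' * zp m' k) * c) with (d * zp m' k * (m' * c)) by ring. tauto.
Qed.

Lemma copow a b k : Z.gcd a b = 1 -> (a | zp b k) -> (a | 1).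
Proof.
  intros Hg. induction k as [|k IH]; simpl; auto.
  intros H. apply IH. eapply Z.gauss; eauto.
Qed.

Lemma inB_all m n (Hm : m <> 0) (Hmn : (m | n)) : forall k j, (m | j) -> inB m n k j.
Proof.
  induction k as [|k IH]; intros j Hj; simpl; auto.
  split. - apply Z.mod_divide; auto. - apply IH. apply Z.divide_mul_r. auto.
Qed.

Lemma inS_1 m n k j : inS m n (S k) j -> (n | j) \/ n = 0.
Proof.
  simpl. intros [H _]. destruct (Z.eq_dec n 0); auto. left. apply Z.mod_divide; auto.
Qed.

Section NT.
Variables m n : Z.
Hypothesis Hm : m <> 0.
Hypothesis Hn : n <> 0.
Hypothesis Hlt : Z.abs m < Z.abs n.

Definition dd := Z.gcd m n.
Definition m' := m / dd.
Definition n' := n / dd.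

Lemma dd_pos : 0 < dd.
Proof.
  unfold dd. pose proof (Z.gcd_nonneg m n) as Hnn. destruct (Z.eq_dec (Z.gcd m n) 0) as [H|H].
  - apply Z.gcd_eq_0 in H. lia.
  - lia.
Qed.

Lemma Em : m = dd * m'.
Proof.
  unfold m'. apply Z.div_exact. pose proof dd_pos; lia.
  apply Z.mod_divide. pose proof dd_pos; lia. apply Z.gcd_divide_l.
Qed.
Lemma En : n = dd * n'.
Proof.
  unfold n'. apply Z.div_exact. pose proof dd_pos; lia.
  apply Z.mod_divide. pose proof dd_pos; lia. apply Z.gcd_divide_r.
Qed.
Lemma Eg : Z.gcd m' n' = 1.
Proof. apply Z.gcd_div_gcd; [pose proof dd_pos; lia | reflexivity]. Qed.

Lemma dd_le : dd <= Z.abs m.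
Proof.
  apply Z.divide_pos_le. lia. apply Z.divide_abs_r. apply Z.gcd_divide_l.
Qed.

Lemma NB p q : (1 <= p)%nat -> (1 <= q)%nat ->
  inS m n p (dd * zp n' p) /\ ~ inS m n (p + q) (dd * zp n' p).
Proof.
  intros Hp Hq. pose proof dd_pos as Hd. split.
  - pose proof (inS_shift m n dd n' m' Hn En Em p 0 1) as H.
    rewrite Nat.add_0_r, Z.mul_1_r in H. apply H. simpl. auto.
  - pose proof (inS_shift m n dd n' m' Hn En Em p q 1) as H.
    rewrite Z.mul_1_r in H. rewrite H. clear H.
    destruct q as [|q]; [lia|]. intros H. apply inS_1 in H. destruct H as [H|H]; [|contradiction].
    rewrite Z.mul_1_r in H. rewrite En in H. apply Z.mul_divide_cancel_l in H; [|lia].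
    apply (copow n' m' p) in H; [|rewrite Z.gcd_comm; apply Eg].
    apply Z.divide_1_r in H.
    assert (Z.abs n = dd) by (rewrite En; destruct H as [H|H]; rewrite H; lia).
    pose proof dd_le; lia.
Qed.

Lemma NC p q : (1 <= p)%nat -> ~ (m | n) ->
  inS m n q (dd * zp n' q) /\ ~ inB m n p (dd * zp n' q).
Proof.
  intros Hp Hmn. pose proof dd_pos as Hd. split.
  - pose proof (inS_shift m n dd n' m' Hn En Em q 0 1) as H.
    rewrite Nat.add_0_r, Z.mul_1_r in H. apply H. simpl. auto.
  - destruct p as [|p]; [lia|]. simpl. intros [H _].
    apply Z.mod_divide in H; auto. rewrite Em in H. apply Z.mul_divide_cancel_l in H; [|lia].
    apply (copow m' n' q) in H; [|apply Eg].
    apply Z.divide_1_r in H. apply Hmn. rewrite Em, En.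
    destruct H as [H|H]; rewrite H; [exists n'; ring | exists (- n'); ring].
Qed.

Lemma ND p q c : (m | n) -> (1 <= q)%nat -> inS m n q c -> inB m n p c.
Proof.
  intros Hmn Hq H. destruct q as [|q]; [lia|]. apply inS_1 in H. destruct H as [H|H]; [|contradiction].
  apply inB_all; auto. eapply Z.divide_trans; eauto.
Qed.

End NT.

Section Main3.
Variables m n : Z.
Hypothesis Hm : m <> 0.
Hypothesis Hn : n <> 0.
Notation geq := (bs_eq m n).
Notation EE := (E m n).

Definition headF (X : NF) := match fst X with (_, true) :: _ => False | _ => True end.

Lemma addb_len : forall b j s, length (fst (addb m n j b s)) = length b.
Proof. induction b as [|[r e] b IH]; intros; simpl; auto. Qed.

Lemma addb_headF b j s : headF (b, s) -> headF (addb m n j b s).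
Proof. destruct b as [|[r e] b]; simpl; auto. Qed.

Lemma addb_app : forall B j b s, addb m n j (B ++ b) s =
  (fst (addb m n j B 0) ++ fst (addb m n (snd (addb m n j B 0)) b s),
   snd (addb m n (snd (addb m n j B 0)) b s)).
Proof.
  induction B as [|[r e] B IH]; intros j b s.
  - simpl. destruct (addb m n j b s); reflexivity.
  - simpl. rewrite IH. reflexivity.
Qed.

Lemma actT_headF X : headF X -> actT X = ((0, false) :: fst X, snd X).
Proof. destruct X as [[|[r [|]] b] s]; simpl; auto; contradiction. Qed.

Lemma Struct : forall ks, exists B c, length B = length ks /\ headF (B, 0) /\
  forall Y, valid m n Y -> headF Y -> act m n (posw ks) Y = (B ++ fst (addN m n c Y), snd (addN m n c Y)).
Proof.
  induction ks as [|k ks IH].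
  - exists [], 0. split; [reflexivity|split; [exact I|]].
    intros Y Hv _. simpl. rewrite addN_0 by auto. destruct Y; reflexivity.
  - destruct IH as [B' [c' [Hl [Hh Hact]]]].
    set (c0 := (0 + k) / n * m).
    exists (((0 + k) mod n, false) :: fst (addb m n c0 B' 0)), (snd (addb m n c0 B' 0) + c').
    split; [simpl; rewrite addb_len; auto|split; [exact I|]].
    intros Y Hv HY. cbn [posw]. rewrite act_app, act_cons.
    rewrite act_gpowA by (auto; apply act1_valid, act_valid; auto).
    rewrite Hact by auto. unfold act1.
    rewrite actT_headF.
    2:{ destruct B' as [|[r [|]] B'']; simpl in *; auto.
        apply (addb_headF (fst Y) c' (snd Y)). destruct Y; auto. }
    unfold addN. cbn [fst snd addb modu carr]. fold c0.
    rewrite addb_app. rewrite addb_add by auto. reflexivity.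
Qed.

Lemma app_eq_len {A} : forall (a b x y : list A), length a = length b -> a ++ x = b ++ y -> a = b.
Proof.
  induction a as [|u a IH]; intros [|v b] x y Hl He; simpl in *; try discriminate; auto.
  injection He as -> He. f_equal. eapply IH; eauto.
Qed.

Lemma E_valid w : valid m n (EE w).
Proof. apply act_valid; auto. exact I. Qed.

Lemma E_posw_headF ks : headF (EE (posw ks)).
Proof.
  destruct (Struct ks) as [B [c [_ [Hh Hact]]]]. unfold E. rewrite Hact by exact I.
  destruct B as [|[r [|]] B]; simpl in *; auto.
Qed.

Lemma coreA K1 K2 Y1 Y2 : length K1 = length K2 -> headF (EE Y1) -> headF (EE Y2) ->
  fst (EE (posw K1 ++ Y1)) = fst (EE (posw K2 ++ Y2)) -> fst (EE (posw K1)) = fst (EE (posw K2)).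
Proof.
  intros Hl H1 H2 H.
  destruct (Struct K1) as [B1 [c1 [Hl1 [_ Hact1]]]].
  destruct (Struct K2) as [B2 [c2 [Hl2 [_ Hact2]]]].
  rewrite !E_app, Hact1, Hact2 in H by (auto using E_valid). simpl in H.
  apply app_eq_len in H; [|congruence].
  unfold E. rewrite Hact1, Hact2 by exact I. simpl. congruence.
Qed.

Lemma fst_geq u v : geq u v -> fst (EE u) = fst (EE v).
Proof. intros H. apply geq_iff in H; auto. congruence. Qed.

Lemma fst_mul_l g u v : fst (EE u) = fst (EE v) -> fst (EE (g ++ u)) = fst (EE (g ++ v)).
Proof.
  intros H. apply fstE_geq in H; auto. set (k := snd (EE u) - snd (EE v)) in H.
  apply (geq_fstE m n Hm Hn _ _ k). clearbody k. rewrite H. rewrite app_assoc. reflexivity.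
Qed.

Lemma texp_posw ks : texp (posw ks) = Z.of_nat (length ks).
Proof.
  induction ks as [|k ks IH]; [reflexivity|]. cbn [posw length].
  rewrite texp_app. cbn [texp]. rewrite texp_gpow, IH. lia.
Qed.

Lemma texp_tpow k : texp (tpow k) = Z.of_nat k.
Proof. rewrite <- gpowT_pos, texp_gpow. reflexivity. Qed.

Lemma posw_zeros q : posw (repeat 0 q) = tpow q.
Proof. induction q; simpl; auto. rewrite IHq. reflexivity. Qed.

Lemma typeT u w : vty u = TypeA -> adjL m n u w -> vty w = TypeT.
Proof.
  intros Hu [Hns [h [H1 H2]]]. destruct (vty w) eqn:Hw; auto. exfalso. apply Hns.
  split; [congruence|]. intros h'. rewrite !lineA by auto.
  rewrite lineA in H1, H2 by auto. rewrite H1 in H2. rewrite H2. tauto.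
Qed.

Lemma Tw_line w h : vty w = TypeT -> line m n w h -> exists k, geq h (vrep w ++ gpow GT k).
Proof. intros Hw H. apply lineT in H; auto. Qed.

Lemma not_vsame_AT u w : vty u = TypeA -> vty w = TypeT -> ~ vsame m n u w.
Proof. intros H1 H2 [H _]. congruence. Qed.

Lemma headF_zeros k s : headF (zeros k, s).
Proof. destruct k; exact I. Qed.

Section Setup.
Variables (u1 u2 u3 : vertex) (g : word) (ks1 ks2 : list Z).
Hypothesis Hv1 : vty u1 = TypeA.
Hypothesis Hv2 : vty u2 = TypeA.
Hypothesis Hv3 : vty u3 = TypeA.
Hypothesis Hu1 : forall h, line m n u1 h <-> fst (EE h) = fst (EE g).
Hypothesis Hu2 : forall h, line m n u2 h <-> fst (EE h) = fst (EE (g ++ posw ks1)).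
Hypothesis Hu3 : forall h, line m n u3 h <-> fst (EE h) = fst (EE (g ++ posw ks1 ++ posw ks2)).
Hypothesis Hp : (1 <= length ks1)%nat.
Hypothesis Hq : (1 <= length ks2)%nat.

Let p := length ks1.
Let q := length ks2.
Let P := posw ks1.
Let Q := posw ks2.

Lemma CA w : Lam m n u1 u3 w -> vty w = TypeT /\ exists i k1,
  geq (vrep w ++ gpow GT k1) (g ++ gpow GA i) /\
  fst (EE (gpow GA i ++ tpow p)) = fst (EE P) /\
  fst (EE (g ++ gpow GA i ++ tpow (p + q))) = fst (EE (g ++ P ++ Q)).
Proof.
  intros [[Hn1 [h1 [L1 W1]]] [Hn3 [h3 [L3 W3]]]].
  assert (Hw : vty w = TypeT) by (eapply typeT; [|split; eauto]; auto).
  split; auto.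
  destruct (Tw_line w h1 Hw W1) as [k1 K1]. destruct (Tw_line w h3 Hw W3) as [k3 K3].
  apply Hu1 in L1. apply Hu3 in L3.
  pose proof (fstE_geq m n Hm Hn _ _ L1) as G1. set (i := snd (EE h1) - snd (EE g)) in G1.
  exists i, k1.
  assert (T1 := texp_geq m n _ _ K1). assert (T1' := texp_fst m n Hm Hn _ _ L1).
  assert (T3 := texp_geq m n _ _ K3). assert (T3' := texp_fst m n Hm Hn _ _ L3).
  rewrite !texp_app, !texp_gpow in T1, T3. rewrite !texp_app, !texp_posw in T3'.
  assert (Hk3 : k3 = k1 + Z.of_nat (p + q)) by (unfold p, q; lia).
  assert (G3 : geq h3 (g ++ gpow GA i ++ tpow (p + q))).
  { rewrite K3, Hk3, <- gpow_add, gpowT_pos. rewrite app_assoc, <- K1, G1.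
    rewrite <- app_assoc. reflexivity. }
  split; [|split].
  - rewrite <- K1. exact G1.
  - apply fst_geq in G3. rewrite L3 in G3. symmetry in G3. apply fst_cancel in G3; auto.
    rewrite tpow_add in G3. destruct p as [|p'] eqn:Ep; [lia|].
    replace (gpow GA i ++ tpow (S p') ++ tpow q) with (posw (i :: repeat 0 p') ++ posw (repeat 0 q)) in G3
      by (cbn [posw]; rewrite !posw_zeros; unfold tpow; simpl; rewrite <- app_assoc; reflexivity).
    apply coreA in G3.
    + replace (gpow GA i ++ tpow (S p')) with (posw (i :: repeat 0 p'))
        by (cbn [posw]; rewrite posw_zeros; reflexivity). exact G3.
    + simpl. rewrite repeat_length. auto.
    + rewrite posw_zeros, E_tpow. apply headF_zeros.
    + apply E_posw_headF.
  - apply fst_geq in G3. rewrite <- G3. auto.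
Qed.


Lemma adj2 w : Lam m n u1 u3 w -> adjL m n u2 w.
Proof.
  intros H. destruct (CA w H) as [Hw [i [k1 [G1 [GP _]]]]].
  split; [apply not_vsame_AT; auto|].
  exists (vrep w ++ gpow GT (k1 + Z.of_nat p)). split.
  - apply Hu2.
    assert (Hg : geq (vrep w ++ gpow GT (k1 + Z.of_nat p)) ((g ++ gpow GA i) ++ tpow p))
      by (rewrite <- gpow_add, gpowT_pos, app_assoc, G1; reflexivity).
    rewrite (fst_geq _ _ Hg).
    rewrite <- app_assoc. apply fst_mul_l. exact GP.
  - apply lineT; auto. exists (k1 + Z.of_nat p). reflexivity.
Qed.

Variable i : Z.
Hypothesis GP : fst (EE (gpow GA i ++ tpow p)) = fst (EE P).
Hypothesis GPQ : fst (EE (g ++ gpow GA i ++ tpow (p + q))) = fst (EE (g ++ P ++ Q)).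

Lemma fst_shift_r u k : fst (EE (u ++ gpow GA k)) = fst (EE u).
Proof. rewrite E_shiftA by auto. reflexivity. Qed.

Lemma witB (Hlt : Z.abs m < Z.abs n) : exists w, Lam m n u1 u2 w /\ ~ Lam m n u1 u3 w.
Proof.
  set (J := dd m n * zp (n' m n) p).
  destruct (NB m n Hm Hn Hlt p q Hp Hq) as [HS HnS]. fold J in HS, HnS.
  exists (Vtx TypeT (g ++ gpow GA (i + J))). split; [split|].
  - split; [apply not_vsame_AT; auto|].
    exists (g ++ gpow GA (i + J)). split.
    + apply Hu1. apply fst_shift_r.
    + apply lineT; [reflexivity|]. exists 0. simpl. rewrite app_nil_r. reflexivity.
  - split; [apply not_vsame_AT; auto|].
    exists ((g ++ gpow GA (i + J)) ++ tpow p). split.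
    + apply Hu2. destruct (InS_geq m n Hm Hn p J HS) as [f Hf].
      assert (Hg : geq ((g ++ gpow GA (i + J)) ++ tpow p) ((g ++ gpow GA i ++ tpow p) ++ gpow GA f)).
      { rewrite <- gpow_add. rewrite <- !app_assoc. rewrite Hf. reflexivity. }
      rewrite (fst_geq _ _ Hg), fst_shift_r. apply fst_mul_l. exact GP.
    + apply lineT; [reflexivity|]. exists (Z.of_nat p). rewrite gpowT_pos. reflexivity.
  - intros [_ [_ [h [L3 W]]]]. apply Hu3 in L3. apply lineT in W; [|reflexivity].
    destruct W as [r Hr].
    cbn [vrep vty vgen] in Hr.
    assert (T1 := texp_geq m n _ _ Hr). assert (T3 := texp_fst m n Hm Hn _ _ L3).
    rewrite !texp_app, !texp_gpow in T1. rewrite !texp_app, !texp_posw in T3.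
    assert (Hr' : r = Z.of_nat (p + q)) by (unfold p, q; rewrite Nat2Z.inj_add; clear -T1 T3; lia). subst r.
    rewrite gpowT_pos in Hr.
    assert (Hr2 : geq h (g ++ gpow GA i ++ (gpow GA J ++ tpow (p + q))))
      by (rewrite Hr, <- gpow_add, <- !app_assoc; reflexivity).
    apply fst_geq in Hr2. unfold P, Q in GPQ. rewrite L3, <- GPQ in Hr2.
    apply fst_cancel, fst_cancel in Hr2; auto. clear Hr. rename Hr2 into Hr.
    symmetry in Hr. apply fstE_geq in Hr; auto. apply InS_rev in Hr; auto.
Qed.

Lemma witC : ~ (m | n) -> exists w, Lam m n u2 u3 w /\ ~ Lam m n u1 u3 w.
Proof.
  intros Hmn.
  set (J := dd m n * zp (n' m n) q).
  destruct (NC m n Hm Hn p q Hp Hmn) as [HS HnB]. fold J in HS, HnB.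
  exists (Vtx TypeT (g ++ gpow GA i ++ tpow p ++ gpow GA J)). split; [split|].
  - split; [apply not_vsame_AT; auto|].
    exists (g ++ gpow GA i ++ tpow p ++ gpow GA J). split.
    + apply Hu2. rewrite !app_assoc, fst_shift_r, <- !app_assoc. apply fst_mul_l. exact GP.
    + apply lineT; [reflexivity|]. exists 0. simpl. rewrite app_nil_r. reflexivity.
  - split; [apply not_vsame_AT; auto|].
    exists ((g ++ gpow GA i ++ tpow p ++ gpow GA J) ++ tpow q). split.
    + apply Hu3. destruct (InS_geq m n Hm Hn q J HS) as [f Hf].
      assert (Hg : geq ((g ++ gpow GA i ++ tpow p ++ gpow GA J) ++ tpow q)
                       ((g ++ gpow GA i ++ tpow (p + q)) ++ gpow GA f)).
      { rewrite tpow_add. rewrite <- !app_assoc. rewrite Hf. reflexivity. }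
      rewrite (fst_geq _ _ Hg), fst_shift_r. exact GPQ.
    + apply lineT; [reflexivity|]. exists (Z.of_nat q). rewrite gpowT_pos. reflexivity.
  - intros [[_ [h [L1 W]]] _]. apply Hu1 in L1. apply lineT in W; [|reflexivity].
    destruct W as [r Hr]. cbn [vrep vty vgen] in Hr.
    assert (T1 := texp_geq m n _ _ Hr). assert (T3 := texp_fst m n Hm Hn _ _ L1).
    rewrite !texp_app, !texp_gpow, texp_tpow in T1.
    assert (Hr' : r = - Z.of_nat p) by (unfold p; clear -T1 T3; lia). subst r.
    rewrite gpowT_neg in Hr. apply fst_geq in Hr. rewrite L1 in Hr.
    rewrite <- (fst_shift_r g i) in Hr. rewrite <- !app_assoc in Hr.
    rewrite <- (app_nil_r (g ++ gpow GA i)) in Hr. rewrite <- !app_assoc in Hr.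
    apply fst_cancel, fst_cancel in Hr; auto.
    symmetry in Hr. apply fstE_geq in Hr; auto. apply InB_rev in Hr; auto.
Qed.

Lemma claimD : (m | n) -> forall w, Lam m n u2 u3 w -> Lam m n u1 u3 w.
Proof.
  intros Hmn w [[Hn2 [h2 [L2 W2]]] A3]. pose proof A3 as A3'. destruct A3' as [Hn3 [h3 [L3 W3]]].
  assert (Hw : vty w = TypeT) by (eapply typeT; [|split; eauto]; auto).
  destruct (Tw_line w h2 Hw W2) as [k2 K2]. destruct (Tw_line w h3 Hw W3) as [k3 K3].
  apply Hu2 in L2. apply Hu3 in L3.
  assert (T2 := texp_geq m n _ _ K2). assert (T2' := texp_fst m n Hm Hn _ _ L2).
  assert (T3 := texp_geq m n _ _ K3). assert (T3' := texp_fst m n Hm Hn _ _ L3).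
  rewrite ?texp_app, ?texp_gpow in T2. rewrite ?texp_app, ?texp_gpow in T3. rewrite ?texp_app, ?texp_posw in T2'. rewrite ?texp_app, ?texp_posw in T3'.
  assert (Hk3 : k3 = k2 + Z.of_nat q) by (unfold q; clear -T2 T2' T3 T3'; lia).
  assert (L2' : fst (EE h2) = fst (EE (g ++ gpow GA i ++ tpow p))).
  { rewrite L2. symmetry. apply fst_mul_l. unfold P in GP. exact GP. }
  pose proof (fstE_geq m n Hm Hn _ _ L2') as G2.
  set (c := snd (EE h2) - snd (EE (g ++ gpow GA i ++ tpow p))) in G2. clearbody c.
  assert (G3 : geq h3 ((g ++ gpow GA i ++ tpow p) ++ gpow GA c ++ tpow q)).
  { rewrite K3, Hk3, <- gpow_add, gpowT_pos, app_assoc, <- K2, G2, <- app_assoc. reflexivity. }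
  apply fst_geq in G3. unfold P, Q in GPQ. rewrite L3, <- GPQ, tpow_add in G3.
  replace (g ++ gpow GA i ++ tpow p ++ tpow q) with ((g ++ gpow GA i ++ tpow p) ++ tpow q) in G3
    by (rewrite <- !app_assoc; reflexivity).
  apply fst_cancel in G3; auto.
  symmetry in G3. apply fstE_geq in G3; auto. apply InS_rev in G3; auto.
  apply (ND m n Hm Hn p q) in G3; auto.
  destruct (InB_geq m n Hm Hn p c G3) as [f Hf].
  split; [|exact A3].
  split; [apply not_vsame_AT; auto|].
  exists (vrep w ++ gpow GT (k2 + - Z.of_nat p)). split.
  - apply Hu1.
    assert (Hg : geq (vrep w ++ gpow GT (k2 + - Z.of_nat p)) (g ++ gpow GA (i + f))).
    { rewrite <- gpow_add, gpowT_neg, app_assoc, <- K2, G2.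
      rewrite <- !app_assoc. rewrite Hf. rewrite gpow_add. reflexivity. }
    rewrite (fst_geq _ _ Hg). apply fst_shift_r.
  - apply lineT; auto. eexists; reflexivity.
Qed.

End Setup.
End Main3.

Theorem corollary3p7 (m n : Z) (u1 u2 u3 : vertex) :
  m <> 0 -> n <> 0 -> Z.abs m < Z.abs n ->
  vty u1 = TypeA -> vty u2 = TypeA -> vty u3 = TypeA ->
  Tlt m n u1 u2 -> Tlt m n u2 u3 ->
  (exists w, Lam m n u1 u3 w) ->
  pssubset (Lam m n u1 u3) (Lam m n u1 u2) /\
  psubset (Lam m n u1 u3) (Lam m n u2 u3) /\
  (~ (m | n) -> pssubset (Lam m n u1 u3) (Lam m n u2 u3)) /\
  ((m | n) -> peq (Lam m n u1 u3) (Lam m n u2 u3)).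
Proof.
  intros Hm Hn Hlt Hv1 Hv2 Hv3 H12 H23 [w0 Hw0].
  set (g := vrep u1).
  assert (Hu1 : forall h, line m n u1 h <-> fst (E m n h) = fst (E m n g))
    by (intros; apply lineA; auto).
  destruct (Tlt_chain m n Hm Hn u1 u2 H12 g) as [ks1 [Hp E2]]; [apply Hu1; reflexivity|].
  assert (Hu2 : forall h, line m n u2 h <-> fst (E m n h) = fst (E m n (g ++ posw ks1)))
    by (intros; rewrite lineA by auto; rewrite E2; tauto).
  destruct (Tlt_chain m n Hm Hn u2 u3 H23 (g ++ posw ks1)) as [ks2 [Hq E3]]; [apply Hu2; reflexivity|].
  assert (Hu3 : forall h, line m n u3 h <-> fst (E m n h) = fst (E m n (g ++ posw ks1 ++ posw ks2)))
    by (intros; rewrite lineA by auto; rewrite E3, <- app_assoc; tauto).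
  destruct (CA m n Hm Hn u1 u3 g ks1 ks2 Hv3 Hu1 Hu3 Hp Hq w0 Hw0) as [_ [i [k1 [_ [GP GPQ]]]]].
  assert (S12 : psubset (Lam m n u1 u3) (Lam m n u1 u2)).
  { intros w Hw. split; [apply Hw|]. apply (adj2 m n Hm Hn u1 u2 u3 g ks1 ks2); auto. }
  assert (S23 : psubset (Lam m n u1 u3) (Lam m n u2 u3)).
  { intros w Hw. split; [|apply Hw]. apply (adj2 m n Hm Hn u1 u2 u3 g ks1 ks2); auto. }
  split; [split; [exact S12|]|].
  { destruct (witB m n Hm Hn u1 u2 u3 g ks1 ks2 Hv1 Hv2 Hu1 Hu2 Hu3 Hp Hq i GP GPQ Hlt) as [w [A B]].
    exists w; auto. }
  split; [exact S23|].
  split.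
  - intros Hmn. split; [exact S23|].
    destruct (witC m n Hm Hn u1 u2 u3 g ks1 ks2 Hv2 Hv3 Hu1 Hu2 Hu3 Hp i GP GPQ Hmn) as [w [A B]].
    exists w; auto.
  - intros Hmn w. split; [apply S23|].
    apply (claimD m n Hm Hn u1 u2 u3 g ks1 ks2 Hv1 Hv3 Hu1 Hu2 Hu3 Hq i GP GPQ Hmn).
Qed.
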